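(* Let $G$ be a non-discrete, torsion-free locally compact abelian group. Then $G_{op}\neq 0$.
   Context: A subgroup $H$ of an abelian group $G$ is pure if $nH=H\cap nG$ for every positive integer $n$. For an LCA group $G$, $G_{op}$ (the $OP$ subgroup of $G$) denotes the intersection of all open pure subgroups of $G$. *)

(* Defs.v *)
From HB Require Import structures.
From mathcomp Require Import all_boot all_order all_algebra.
From mathcomp Require Import all_classical all_reals all_analysis.
Set Implicit Arguments. Unset Strict Implicit. Unset Printing Implicit Defensive.
Import GRing.Theory.
Local Open Scope classical_set_scope.
Local Open Scope ring_scope.

Definition is_subgroup (G : zmodType) (H : set G) : Prop :=
  H 0 /\ (forall x y, H x -> H y -> H (x - y)).

Definition mulset (G : zmodType) (n : nat) (H : set G) : set G :=
  [set x *+ n | x in H].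

Definition pure_subgroup (G : zmodType) (H : set G) : Prop :=
  is_subgroup H /\
  (forall n : nat, (0 < n)%N -> mulset n H = H `&` mulset n [set: G]).

Definition OP_subgroup (G : topologicalZmodType) : set G :=
  \bigcap_(H in [set H : set G | open H /\ pure_subgroup H]) H.

Definition torsion_free (G : zmodType) : Prop :=
  forall (x : G) (n : nat), (0 < n)%N -> x *+ n = 0 -> x = 0.

Definition discrete_topological (G : topologicalType) : Prop :=
  forall A : set G, open A.

Definition LCA (G : topologicalZmodType) : Prop :=
  hausdorff_space G /\ locally_compact [set: G].

Arguments OP_subgroup : clear implicits.
Arguments torsion_free : clear implicits.
Arguments discrete_topological : clear implicits.
Arguments LCA : clear implicits.

(* Main.v *)
Require Import Defs.
From HB Require Import structures.
From mathcomp Require Import all_boot all_order all_algebra.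
From mathcomp Require Import all_classical all_reals all_analysis.
Local Open Scope classical_set_scope.
Local Open Scope ring_scope.
Import GRing.Theory.

Lemma pig_nat (h : nat -> nat) n M : (n <= M)%N -> (forall k, (k <= M)%N -> (h k < n)%N) ->
  exists i j, [/\ (i < j)%N, (j <= M)%N & h i = h j].
Proof.
move=> nM hb; apply: contrapT => hno.
have u : uniq (map h (iota 0 M.+1)).
  rewrite map_inj_in_uniq ?iota_uniq // => i j; rewrite !mem_iota /= !add0n !ltnS => iM jM hij.
  case: (ltngtP i j) => // [ij|ji]; first by exfalso; apply: hno; exists i, j.
  by exfalso; apply: hno; exists j, i.
have : (M.+1 <= n)%N.
  have := uniq_leq_size u (s2 := iota 0 n); rewrite size_map !size_iota; apply => x /mapP [k]; rewrite mem_iota /= add0n ltnS => kM ->.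
  by rewrite mem_iota /= add0n hb.
by rewrite ltnNge nM.
Qed.

Section S.
Variable G : topologicalZmodType.

Lemma sg_add (P : set G) x y : is_subgroup P -> P x -> P y -> P (x + y).
Proof.
move=> [P0 PB] Px Py.
have Pny : P (- y) by rewrite -sub0r; apply: PB.
by rewrite -[y]opprK; apply: PB.
Qed.

Lemma sg_sub (P : set G) x y : is_subgroup P -> P x -> P y -> P (x - y).
Proof. by move=> [_ PB]; apply: PB. Qed.

Lemma sg_muln (P : set G) x n : is_subgroup P -> P x -> P (x *+ n).
Proof.
move=> sP Px; elim: n => [|n IH]; first by rewrite mulr0n; case: sP.
by rewrite mulrS; apply: sg_add.
Qed.

Definition divc (P : set G) := forall n x, (0 < n)%N -> P (x *+ n) -> P x.

Lemma pure_divc (P : set G) : torsion_free G -> pure_subgroup P -> divc P.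
Proof.
move=> tf [sP pP] n x n0 Pxn.
have : (P `&` mulset n [set: G]) (x *+ n) by split=> //; exists x.
rewrite -pP // => -[p Pp epx].
have : (x - p) *+ n = 0 by rewrite mulrnBl epx subrr.
move/(tf _ _ n0)/eqP; rewrite subr_eq0 => /eqP ->; exact Pp.
Qed.

Lemma nbhs_trans (A : set G) a : nbhs 0 A -> nbhs a [set x | A (x - a)].
Proof.
move=> nA.
have c : {for a, continuous (fun x : G => x - a)}.
  apply: (@continuous_comp _ _ _ (fun x : G => (x, a)) (fun p : G * G => p.1 - p.2)).
    by apply: cvg_pair; [exact: cvg_id | exact: cvg_cst].
  exact: sub_continuous.
have := c A; rewrite /= subrr; exact.
Qed.

Lemma open_sg_closed (P : set G) : is_subgroup P -> open P -> closed P.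
Proof.
move=> sP oP; rewrite -(setCK P) closedC openE => b nPb.
change (nbhs b (~` P)).
have n0 : nbhs (0 : G) P by apply: open_nbhs_nbhs; split => //; case: sP.
have := @nbhs_trans P b n0; apply: filterS => x /= Pxb Px; apply: nPb.
have -> : b = x - (x - b) by rewrite subKr.
exact: sg_sub.
Qed.

Lemma nondisc_nz (U : set G) : ~ discrete_topological G -> nbhs 0 U ->
  exists y, U y /\ y <> 0.
Proof.
move=> nd nU; apply: contrapT => hno; apply: nd => A.
rewrite openE => a Aa; change (nbhs a A).
apply: filterS (@nbhs_trans U a nU) => x /= Ux.
have : x - a = 0 by apply: contrapT => hne; apply: hno; exists (x - a).
by move/eqP; rewrite subr_eq0 => /eqP ->.
Qed.

Lemma cont_muln k : {for 0, continuous (fun x : G => x *+ k)}.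
Proof.
elim: k => [|k IH].
  move=> A /= nA; have A0 := nbhs_singleton nA.
  change (nbhs (0:G) [set x | A (x *+ 0)]); apply: filterE => x /=; rewrite mulr0n.
  exact: nbhs_singleton nA.
rewrite /prop_for /continuous_at.
rewrite -(@eq_cvg _ _ _ (fun x : G => x + x *+ k)); last by move=> y; rewrite mulrS.
rewrite mulrS.
apply: (@continuous_comp _ _ _ (fun x : G => (x, x *+ k)) (fun p : G * G => p.1 + p.2)).
  by apply: cvg_pair; [exact: cvg_id | exact: IH].
exact: add_continuous.
Qed.

Lemma nbhs_muln (U : set G) N : nbhs 0 U ->
  nbhs (0 : G) [set x | forall k, (k <= N)%N -> U (x *+ k)].
Proof.
move=> nU; elim: N => [|N IH].
  have U0 := nbhs_singleton nU; apply: filterE => x k; rewrite leqn0 => /eqP ->.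
  by rewrite mulr0n.
have hN : nbhs (0:G) [set x | U (x *+ N.+1)].
  by have := cont_muln N.+1 U; apply; rewrite /= mul0rn.
apply: filterS (filterI IH hN) => x [h1 h2] k; rewrite leq_eqVlt => /orP [/eqP -> //|].
by rewrite ltnS; apply: h1.
Qed.


Definition pG : Type := G.
HB.instance Definition _ := Topological.on pG.
HB.instance Definition _ := isPointed.Build pG (0 : G).

Lemma pig (P V : set G) : is_subgroup P -> open P -> compact V ->
  exists n : nat, forall y M, (n <= M)%N -> (forall k, (k <= M)%N -> V (y *+ k)) ->
  exists d, (0 < d <= M)%N /\ P (y *+ d).
Proof.
move=> sP oP cV.
have n0 : nbhs (0 : G) P by apply: open_nbhs_nbhs; split => //; case: sP.
have cV' : cover_compact (V : set pG) by rewrite -compact_cover.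
have hop : forall a : pG, [set: pG] a -> open [set x : pG | P (x - a)].
  move=> a _; rewrite openE => x Pxa; change (nbhs x [set z : G | P (z - a)]).
  have := @nbhs_trans P x n0; apply: filterS => z /= Pzx.
  have -> : z - a = (z - x) + (x - a) by rewrite addrA subrK.
  exact: sg_add.
have hcov : (V : set pG) `<=` cover [set: pG] (fun a : pG => [set x : pG | P (x - a)]).
  move=> x Vx; exists x; first by []. by rewrite /= subrr; case: sP.
have [D' _ sub] := cV' _ _ _ hop hcov.
exists (size (finmap.enum_fset D')) => y M nM hV.
have hex : forall k, exists a : pG, (k <= M)%N -> a \in finmap.enum_fset D' /\ P (y *+ k - a).
  move=> k; case: (leqP k M) => kM; last by exists 0.
  by have [a Da Pa] := sub _ (hV _ kM); exists a.
have [f hf] := choice hex.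
have [|i [j [ij jM hij]]] := @pig_nat (fun k => index (f k) (finmap.enum_fset D')) _ _ nM.
  move=> k kM /=. rewrite index_mem. by case: (hf _ kM).
have iM : (i <= M)%N by apply: ltnW (leq_trans ij jM).
have fij : f i = f j.
  rewrite -(nth_index 0 (hf _ iM).1) -(nth_index 0 (hf _ jM).1).
  by rewrite /= in hij; rewrite hij.
exists (j - i)%N; split.
  rewrite subn_gt0 ij /=. apply: leq_trans (leq_subr _ _) jM.
rewrite (mulrnBr y (ltnW ij)).
have -> : y *+ j - y *+ i = (y *+ j - f j) - (y *+ i - f i) by rewrite fij opprB addrA subrK.
by apply: sg_sub => //; [exact: (hf _ jM).2 | exact: (hf _ iM).2].
Qed.


Definition good (P : set G) := open P /\ pure_subgroup P.

Lemma main_sec : LCA G -> ~ discrete_topological G -> torsion_free G ->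
  OP_subgroup G <> [set 0].
Proof.
move=> [_ lc] nd tf.
suff [y [y0 hy]] : exists y : G, y <> 0 /\ forall P, good P -> P y.
  move=> E; apply: y0.
  have : OP_subgroup G y by move=> P hP; exact: hy.
  by rewrite E.
have [V nV [cV clV]] : exists2 V : set G, nbhs 0 V & compact V /\ closed V.
  by have := lc 0 I; rewrite withinET.
have [[A B] [nA nB] sAB] : nbhs ((0 : G), (0 : G)) [set p | V (p.1 + p.2)].
  by have := add_continuous (0, 0) V; rewrite /= addr0; apply.
pose W := (A `&` B)°.
have oW : open W by exact: open_interior.
have W0 : W 0 by rewrite /W /interior; apply: filterI.
have WW : forall x z, W x -> W z -> V (x + z).
  move=> x z /interior_subset [Ax _] /interior_subset [_ Bz].
  exact: (sAB (x, z)).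
have WV : forall x, W x -> V x by move=> x Wx; rewrite -[x]addr0; apply: WW.
have nW : nbhs (0:G) W by apply: open_nbhs_nbhs.
have gP : forall P, good P -> [/\ is_subgroup P, open P & divc P].
  by move=> P [oP pP]; split => //; [case: pP | exact: pure_divc].
have [[y [y0 hyV]]|hB] := pselect (exists y : G, y <> 0 /\ forall k, V (y *+ k)).
  exists y; split => // P /gP [sP oP dP].
  have [n hn] := @pig _ V sP oP cV.
  have [d [/andP [d0 _] Pd]] := hn y n (leqnn n) (fun k _ => hyV k).
  exact: dP Pd.
pose C := V `&` ~` W.
have clC : closed C by apply: closedI => //; exact: open_closedC.
have cC : compact C by apply: subclosed_compact clC cV _ => x [].
have claim : forall L : seq (set G), (forall P, P \in L -> good P) ->
    exists x, C x /\ forall P, P \in L -> P x.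
  move=> L hL.
  have hex : forall P : set G, exists n : nat, good P -> forall y M, (n <= M)%N ->
      (forall k, (k <= M)%N -> V (y *+ k)) -> exists d, (0 < d <= M)%N /\ P (y *+ d).
    move=> P; have [/gP [sP oP _]|ng] := pselect (good P); last by exists 0.
    by have [n hn] := @pig _ V sP oP cV; exists n.
  have [nf hnf] := choice hex.
  pose N := (\max_(P <- L) nf P)%N.
  have [y [[Uy Wy] y0]] := @nondisc_nz _ nd (filterI (@nbhs_muln _ N nW) nW).
  have exk : exists k, ~~ asbool (W (y *+ k)).
    apply: contrapT => hno; apply: hB; exists y; split => // k; apply: WV.
    by apply: contrapT => nw; apply: hno; exists k; apply/asboolPn.
  case: (ex_minnP exk) => m /asboolPn nWm mmin.
  have lt_m : forall k, (k < m)%N -> W (y *+ k).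
    move=> k km; apply: contrapT => nw.
    by have := mmin k (introT (asboolPn _) nw); rewrite leqNgt km.
  have Nm : (N < m)%N by rewrite ltnNge; apply/negP => mN; exact: nWm (Uy _ mN).
  have Vall : forall k, (k <= m)%N -> V (y *+ k).
    move=> k; rewrite leq_eqVlt => /orP [/eqP ->|km]; last exact/WV/lt_m.
    have m0 : (0 < m)%N by apply: leq_ltn_trans Nm.
    rewrite -(prednK m0) mulrS; apply: WW => //; apply: lt_m.
    by rewrite prednK.
  exists (y *+ m); split; first by split; [exact: Vall|].
  move=> P PL; have [sP oP dP] := gP _ (hL _ PL).
  have nPm : (nf P <= m)%N.
    by apply: ltnW; apply: leq_ltn_trans Nm; exact: leq_bigmax_seq.
  have [d [/andP [d0 _] Pd]] := hnf P (hL _ PL) y m nPm Vall.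
  by apply: sg_muln => //; exact: dP Pd.
apply: contrapT => hno.
have cC' : cover_compact (C : set pG) by rewrite -compact_cover.
have hop : forall P : set pG, [set P | good P] P -> open (~` P).
  by move=> P /gP [sP oP _]; apply: closed_openC; exact: open_sg_closed.
have hcov : (C : set pG) `<=` cover [set P | good P] (fun P : set pG => ~` P).
  move=> x Cx; apply: contrapT => nc; apply: hno; exists x; split.
    by move=> x0; case: Cx => _; rewrite x0.
  move=> P gPP; apply: contrapT => nPx; apply: nc; exists P; [exact: gPP | exact: nPx].
have [D' sD sub] := cC' _ _ _ hop hcov.
have [|x [Cx hx]] := claim (finmap.enum_fset D').
  move=> P PD; have := sD P PD; rewrite inE; exact.
have [P PD' nPx] := sub x Cx; apply: nPx; apply: hx; exact PD'.
Qed.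

End S.

Theorem theorem13 (G : topologicalZmodType) :
  LCA G -> ~ discrete_topological G -> torsion_free G ->
  OP_subgroup G <> [set 0].
Proof. exact: (@main_sec G). Qed.
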